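(* For $n\ge1$, the height one prime ideals of $\mathbb{S}_n$ are exactly $\mathfrak p_1,\dots,\mathfrak p_n$. These are $n$ pairwise distinct and pairwise incomparable primes, and $\mathfrak p_1\cap\cdots\cap\mathfrak p_n=\mathfrak p_1\cdots\mathfrak p_n=F(1)\otimes\cdots\otimes F(n)$.
   Context: $K$ is a field. $\mathbb{S}_n$ is the $K$-algebra generated by $x_1,\dots,x_n,y_1,\dots,y_n$ subject to the defining relations $y_ix_i=1$ for all $i$, and $[x_i,y_j]=[x_i,x_j]=[y_i,y_j]=0$ for all $i\ne j$. For each $i$, $\mathbb{S}_1(i)$ is the subalgebra generated by $x_i,y_i$, and $\mathbb{S}_n=\mathbb{S}_1(1)\otimes\cdots\otimes\mathbb{S}_1(n)$. $F(i)=\bigoplus_{k,l\in\mathbb N}K(x_i^ky_i^l-x_i^{k+1}y_i^{l+1})$ is an ideal of $\mathbb{S}_1(i)$. Define $\mathfrak p_i=\mathbb{S}_1(1)\otimes\cdots\otimes\mathbb{S}_1(i-1)\otimes F(i)\otimes\mathbb{S}_1(i+1)\otimes\cdots\otimes\mathbb{S}_1(n)$; then $\mathbb{S}_n/\mathfrak p_i\cong\big(\bigotimes_{j\ne i}\mathbb{S}_1(j)\big)\otimes K[x_i,x_i^{-1}]$. The height of a prime is the supremum of lengths of strictly descending chains of primes starting from it. *)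

(* Defs.v *)
From HB Require Import structures.
From mathcomp Require Import all_boot all_order all_algebra.
Set Implicit Arguments. Unset Strict Implicit. Unset Printing Implicit Defensive.
Import GRing.Theory.
Local Open Scope ring_scope.

Section RingIdeals.
Variable R : pzRingType.

Definition is_ideal (I : R -> Prop) : Prop :=
  [/\ I 0, (forall a b, I a -> I b -> I (a + b)), (forall a, I a -> I (- a))
    & (forall r a, I a -> I (r * a) /\ I (a * r))].

Definition subid (I J : R -> Prop) : Prop := forall a, I a -> J a.
Definition eqid (I J : R -> Prop) : Prop := forall a, I a <-> J a.
Definition ssubid (I J : R -> Prop) : Prop := subid I J /\ exists a, J a /\ ~ I a.

Definition is_prime (P : R -> Prop) : Prop :=
  [/\ is_ideal P, ~ P 1 &
      forall I J, is_ideal I -> is_ideal J ->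
        (forall a b, I a -> J b -> P (a * b)) -> subid I P \/ subid J P].

Definition prime_chain_from (P : R -> Prop) (m : nat) : Prop :=
  exists f : nat -> R -> Prop,
    [/\ eqid (f 0%N) P, (forall k, (k <= m)%N -> is_prime (f k))
      & (forall k, (k < m)%N -> ssubid (f k.+1) (f k))].

Definition prime_height (P : R -> Prop) (h : nat) : Prop :=
  prime_chain_from P h /\ ~ prime_chain_from P h.+1.

Definition prod_ideal (n : nat) (I : 'I_n -> R -> Prop) (a : R) : Prop :=
  exists m (g : 'I_m -> 'I_n -> R),
    (forall t i, I i (g t i)) /\ a = \sum_(t < m) \prod_(i < n) g t i.
End RingIdeals.

Section Sn.
Variables (K : fieldType) (A : algType K) (n : nat) (x y : 'I_n -> A).

Definition gS (j : 'I_n) (k l : nat) : A := x j ^+ k * y j ^+ l.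
(* spanning element x_j^k y_j^l - x_j^{k+1} y_j^{l+1} of F(j) *)
Definition gF (j : 'I_n) (k l : nat) : A := gS j k l - gS j k.+1 l.+1.

Definition smon (al be : {ffun 'I_n -> nat}) : A := \prod_(j < n) gS j (al j) (be j).

Definition Sn_relations : Prop :=
  (forall i, y i * x i = 1) /\
  (forall i j, i != j ->
     [/\ x i * y j = y j * x i, x i * x j = x j * x i & y i * y j = y j * y i]).

(* the standard monomials form a K-basis of A
   (together with the relations this says A is (isomorphic to) S_n) *)
Definition smon_basis : Prop :=
  (forall a : A, exists m (c : 'I_m -> K) (al be : 'I_m -> {ffun 'I_n -> nat}),
      a = \sum_(t < m) c t *: smon (al t) (be t)) /\
  (forall m (c : 'I_m -> K) (al be : 'I_m -> {ffun 'I_n -> nat}),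
      injective (fun t => (al t, be t)) ->
      \sum_(t < m) c t *: smon (al t) (be t) = 0 -> forall t, c t = 0).

(* p_i = S_1(1) ⊗ ... ⊗ F(i) ⊗ ... ⊗ S_1(n): span of products of spanning elements *)
Definition pid (i : 'I_n) (a : A) : Prop :=
  exists m (c : 'I_m -> K) (k l : 'I_m -> 'I_n -> nat),
    a = \sum_(t < m) c t *:
          \prod_(j < n) (if j == i then gF j (k t j) (l t j) else gS j (k t j) (l t j)).

Definition Ftens (a : A) : Prop :=
  exists m (c : 'I_m -> K) (k l : 'I_m -> 'I_n -> nat),
    a = \sum_(t < m) c t *: \prod_(j < n) gF j (k t j) (l t j).
End Sn.

(* Main.v *)
Require Import Defs.
From HB Require Import structures.
From mathcomp Require Import all_boot all_order all_algebra.
Set Implicit Arguments. Unset Strict Implicit. Unset Printing Implicit Defensive.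
Import GRing.Theory.
Local Open Scope ring_scope.
From Stdlib Require Import Lia Classical.

Ltac nlia := repeat match goal with
  | H : is_true (leq _ _) |- _ => move/leP: H => H
  | H : is_true (~~ leq _ _) |- _ => move: H; rewrite -ltnNge => /leP H
  | H : is_true (_ == _) |- _ => move/eqP: H => H
  | H : is_true (_ != _) |- _ => move/eqP: H => H
  end;
  match goal with
  | |- is_true (leq _ _) => apply/leP
  | |- is_true (_ == _) => apply/eqP
  | _ => idtac end;
  rewrite -?plusE -?minusE; unfold addn, subn, addn_rec, subn_rec in *; lia.

Section General.
Variable (R : pzRingType).

Lemma comm_prod (I : eqType) (r : seq I) (F : I -> R) z :
  (forall j, j \in r -> GRing.comm z (F j)) -> GRing.comm z (\prod_(j <- r) F j).
Proof.
elim: r => [|a r IH] H; first by rewrite big_nil; exact: commr1.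
rewrite big_cons; apply: commrM; first by apply: H; rewrite inE eqxx.
by apply: IH => j jr; apply: H; rewrite inE jr orbT.
Qed.

Lemma prod_par (I : eqType) (r : seq I) (F G : I -> R) :
  uniq r -> (forall j j', j \in r -> j' \in r -> j != j' -> GRing.comm (F j') (G j)) ->
  \prod_(j <- r) F j * \prod_(j <- r) G j = \prod_(j <- r) (F j * G j).
Proof.
elim: r => [|a r IH] /=; first by rewrite !big_nil mulr1.
case/andP=> ar ur H; rewrite !big_cons -mulrA (mulrA (\prod_(j <- r) F j)).
have -> : \prod_(j <- r) F j * G a = G a * \prod_(j <- r) F j.
  apply/esym/comm_prod => j jr; apply: commr_sym; apply: H.
  - by rewrite inE eqxx. - by rewrite inE jr orbT.
  by apply/eqP=> e; move: ar; rewrite e jr.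
rewrite -mulrA IH //; first by rewrite mulrA.
by move=> j j' jr j'r; apply: H; rewrite inE ?jr ?j'r orbT.
Qed.

Lemma prod_rep (I : eqType) (r : seq I) (F : I -> R) (i : I) c d :
  uniq r -> i \in r ->
  (forall j, j \in r -> j != i -> GRing.comm c (F j) /\ GRing.comm (F j) d) ->
  c * \prod_(j <- r) F j * d = \prod_(j <- r) (if j == i then c * F j * d else F j).
Proof.
elim: r => [|a r IH] //= /andP[ar ur]; rewrite inE => ir H.
rewrite !big_cons; case: (eqVneq a i) => [ai|ai].
  subst a; rewrite -!mulrA; congr (_ * (_ * _)).
  have -> : \prod_(j <- r) F j * d = d * \prod_(j <- r) F j.
    apply/esym/comm_prod => j jr; apply: commr_sym.
    have jn : j != i by apply/eqP=> e; move: ar; rewrite -e jr.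
    by case: (H j _ jn) => //; rewrite inE jr orbT.
  congr (_ * _); apply: eq_big_seq => j jr.
  by case: eqP => // e; move: ar; rewrite -e jr.
have ir' : i \in r by move: ir; rewrite eq_sym (negbTE ai).
have [H1 H2] := H a (mem_head _ _) ai.
rewrite mulrA H1 -!mulrA; congr (_ * _); rewrite mulrA IH //.
by move=> j jr; apply: H; rewrite inE jr orbT.
Qed.

Lemma prod_if1 (I : finType) (i : I) (z : R) :
  \prod_(j : I) (if j == i then z else 1) = z.
Proof. by rewrite -big_mkcond big_pred1_eq. Qed.

End General.
Section General2.
Variable (R : pzRingType).
Lemma prod_lin1 (I : eqType) (r : seq I) (G : I -> R) (i : I) a b :
  uniq r -> i \in r ->
  \prod_(j <- r) (if j == i then a - b else G j) =
  \prod_(j <- r) (if j == i then a else G j) - \prod_(j <- r) (if j == i then b else G j).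
Proof.
elim: r => [|c r IH] //= /andP[cr ur]; rewrite inE => ir; rewrite !big_cons.
case: (eqVneq c i) => [e|ne].
  subst c; have E z : \prod_(j <- r) (if j == i then z else G j) = \prod_(j <- r) G j.
    by apply: eq_big_seq => j jr; case: eqP => // e; move: cr; rewrite -e jr.
  by rewrite !E mulrBl.
by rewrite IH ?mulrBr //; move: ir; rewrite eq_sym (negbTE ne).
Qed.
End General2.
Section Sn.
Variables (K : fieldType) (A : algType K) (n : nat) (x y : 'I_n -> A).
Hypothesis yx1 : forall i, y i * x i = 1.
Hypothesis cxy : forall i j, i != j -> x i * y j = y j * x i.
Hypothesis cxx : forall i j, i != j -> x i * x j = x j * x i.
Hypothesis cyy : forall i j, i != j -> y i * y j = y j * y i.

Local Notation gS := (gS x y).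
Local Notation gF := (gF x y).
Definition Kt := ({ffun 'I_n -> nat} * {ffun 'I_n -> nat})%type.
Definition sm (m : Kt) := smon x y m.1 m.2.
Definition kmul (m m' : Kt) : Kt :=
  ([ffun j => (m.1 j + (m'.1 j - m.2 j))%N], [ffun j => ((m.2 j - m'.1 j) + m'.2 j)%N]).

Lemma yX i b k : y i ^+ b * x i ^+ k = x i ^+ (k - b)%N * y i ^+ (b - k)%N.
Proof.
elim: b k => [|b IH] k; first by rewrite expr0 mul1r ?subn0 ?sub0n ?expr0 ?mulr1.
case: k => [|k]; first by rewrite expr0 mulr1 ?sub0n ?subn0 ?expr0 ?mul1r.
by rewrite exprSr exprS -mulrA (mulrA (y i)) yx1 mul1r IH !subSS.
Qed.

Lemma gS_mul j a b k l : gS j a b * gS j k l = gS j (a + (k - b))%N ((b - k) + l)%N.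
Proof.
by rewrite /Defs.gS mulrA -(mulrA (x j ^+ a)) yX mulrA -exprD -mulrA -exprD.
Qed.

Lemma commS z j k l : GRing.comm z (x j) -> GRing.comm z (y j) -> GRing.comm z (gS j k l).
Proof. by move=> h1 h2; apply: commrM; apply: commrX. Qed.

Lemma commF z j k l : GRing.comm z (x j) -> GRing.comm z (y j) -> GRing.comm z (gF j k l).
Proof. by move=> h1 h2; apply: commrD; last apply: commrN; apply: commS. Qed.

Lemma cxy' i j : i != j -> GRing.comm (x i) (y j). Proof. exact: cxy. Qed.
Lemma cyx' i j : i != j -> GRing.comm (y i) (x j).
Proof. by move=> h; apply: commr_sym; apply: cxy; rewrite eq_sym. Qed.
Lemma cxx' i j : i != j -> GRing.comm (x i) (x j). Proof. exact: cxx. Qed.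
Lemma cyy' i j : i != j -> GRing.comm (y i) (y j). Proof. exact: cyy. Qed.

Lemma commSS j a b j' k l : j != j' -> GRing.comm (gS j a b) (gS j' k l).
Proof.
move=> h; apply: commS; apply: commr_sym; apply: commS.
all: first [apply: cxx' | apply: cxy' | apply: cyx' | apply: cyy']; by rewrite eq_sym.
Qed.

Lemma sm_mul m m' : sm m * sm m' = sm (kmul m m').
Proof.
rewrite /sm /smon prod_par ?index_enum_uniq //.
  by apply: eq_bigr => j _; rewrite gS_mul !ffunE.
by move=> j j' _ _ h; apply: commSS; rewrite eq_sym.
Qed.

Definition k0 : Kt := ([ffun=> 0%N], [ffun=> 0%N]).
Definition dl (i : 'I_n) : {ffun 'I_n -> nat} := [ffun j => nat_of_bool (j == i)].
Definition ex i : Kt := (dl i, [ffun=> 0%N]).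
Definition ey i : Kt := ([ffun=> 0%N], dl i).

Lemma sm0 : sm k0 = 1.
Proof. by rewrite /sm /smon big1 // => j _; rewrite /Defs.gS !ffunE !expr0 mulr1. Qed.

Lemma smx i : sm (ex i) = x i.
Proof.
rewrite /sm /smon -[RHS](prod_if1 i); apply: eq_bigr => j _.
by rewrite /Defs.gS !ffunE expr0 mulr1; case: eqP => [->|_]; rewrite ?expr1 ?expr0.
Qed.

Lemma smy i : sm (ey i) = y i.
Proof.
rewrite /sm /smon -[RHS](prod_if1 i); apply: eq_bigr => j _.
by rewrite /Defs.gS !ffunE expr0 mul1r; case: eqP => [->|_]; rewrite ?expr1 ?expr0.
Qed.

Definition kshift i (m : Kt) : Kt := ([ffun j => (m.1 j + dl i j)%N], [ffun j => (m.2 j + dl i j)%N]).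

Lemma sm_shift i m : x i * sm m * y i = sm (kshift i m).
Proof.
rewrite -smx -smy !sm_mul; congr sm; rewrite /kmul /kshift /=; congr pair;
by apply/ffunP => j; rewrite !ffunE ?subn0 ?sub0n ?addn0 ?add0n ?subn0 addnC.
Qed.
Hypothesis span : forall a : A, exists m (c : 'I_m -> K) (al be : 'I_m -> {ffun 'I_n -> nat}),
      a = \sum_(t < m) c t *: smon x y (al t) (be t).
Hypothesis indep : forall m (c : 'I_m -> K) (al be : 'I_m -> {ffun 'I_n -> nat}),
      injective (fun t => (al t, be t)) ->
      \sum_(t < m) c t *: smon x y (al t) (be t) = 0 -> forall t, c t = 0.

Definition lin (s : seq (Kt * K)) : A := \sum_(p <- s) p.2 *: sm p.1.

Lemma span_lin a : exists s, a == lin s.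
Proof.
have [m [c [al [be ->]]]] := span a.
exists [seq ((al t, be t), c t) | t <- enum 'I_m]; apply/eqP.
by rewrite /lin big_map big_enum.
Qed.

Lemma sum_pred1_seq (T : eqType) (V : nmodType) (u : seq T) k (G : T -> V) :
  uniq u -> k \in u -> \sum_(j <- u | k == j) G j = G k.
Proof.
move=> uu ku; rewrite big_mkcond (bigD1_seq k) //= eqxx big1 ?addr0 // => j.
by rewrite eq_sym => /negbTE ->.
Qed.

Lemma group_sum (V : nmodType) (s : seq (Kt * K)) (F : Kt * K -> V) :
  \sum_(p <- s) F p = \sum_(k <- undup (map fst s)) \sum_(p <- s | p.1 == k) F p.
Proof.
under [RHS]eq_bigr do rewrite big_mkcond.
rewrite [RHS]exchange_big /=; apply: eq_big_seq => p ps.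
rewrite -big_mkcond (sum_pred1_seq (fun _ => F p)) ?undup_uniq //.
by rewrite mem_undup; apply: map_f.
Qed.

Lemma lin_indep (V : lmodType K) (s : seq (Kt * K)) (f : Kt -> V) :
  lin s = 0 -> \sum_(p <- s) p.2 *: f p.1 = 0.
Proof.
move=> H.
set u := undup (map fst s).
pose c k := \sum_(p <- s | p.1 == k) p.2.
have E (W : lmodType K) (g : Kt -> W) :
    \sum_(p <- s) p.2 *: g p.1 = \sum_(k <- u) c k *: g k.
  rewrite group_sum; apply: eq_big_seq => k _.
  by rewrite /c scaler_suml; apply: eq_bigr => p /eqP ->.
suff c0 : forall k, k \in u -> c k = 0.
  by rewrite E big_seq big1 // => k ku; rewrite c0 ?scale0r.
have uu : uniq u := undup_uniq _.
have := indep (m := size u) (c := fun t => c (nth k0 u t))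
    (al := fun t => (nth k0 u t).1) (be := fun t => (nth k0 u t).2).
move=> /(_ _ _) Hc k ku.
have -> : k = nth k0 u (index k u) by rewrite nth_index.
have := Hc _ _ (Ordinal (n:=size u) (m:=index k u) _); apply => //.
- move=> t1 t2 /= e.
  have e' : nth k0 u t1 = nth k0 u t2.
    by move: e; case: (nth k0 u t1) => ??; case: (nth k0 u t2) => ?? [-> ->].
  apply: val_inj; apply/eqP.
  by rewrite -(nth_uniq k0 (ltn_ord t1) (ltn_ord t2) uu) e'.
- move: (E A sm); rewrite -/(lin s) H => /esym.
  rewrite (big_nth k0) big_mkord => E'; apply: etrans E'; apply: eq_bigr => t _.
  by rewrite /sm; case: (nth k0 u t).
- by rewrite index_mem.
Qed.

Definition rep (a : A) : seq (Kt * K) := xchoose (span_lin a).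
Lemma repP a : a = lin (rep a).
Proof. by apply/eqP; exact: (xchooseP (span_lin a)). Qed.

Definition Lf (V : lmodType K) (f : Kt -> V) (a : A) : V := \sum_(p <- rep a) p.2 *: f p.1.

Lemma lin_cat s s' : lin (s ++ s') = lin s + lin s'.
Proof. by rewrite /lin big_cat. Qed.

Definition scs c (s : seq (Kt * K)) := [seq (p.1, c * p.2) | p <- s].
Lemma lin_scs c s : lin (scs c s) = c *: lin s.
Proof. by rewrite /lin big_map scaler_sumr; apply: eq_bigr => p _; rewrite scalerA. Qed.

Lemma Lf_lin (V : lmodType K) (f : Kt -> V) s : Lf f (lin s) = \sum_(p <- s) p.2 *: f p.1.
Proof.
rewrite /Lf; have := lin_indep f (s := rep (lin s) ++ scs (-1) s).
rewrite lin_cat lin_scs -repP scaleN1r subrr => /(_ erefl).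
rewrite big_cat big_map /= => /eqP; rewrite addr_eq0 => /eqP ->.
by rewrite -sumrN; apply: eq_bigr => p _; rewrite mulN1r scaleNr opprK.
Qed.

Lemma LfD (V : lmodType K) (f : Kt -> V) a b : Lf f (a + b) = Lf f a + Lf f b.
Proof. by rewrite {1}(repP a) {1}(repP b) -lin_cat Lf_lin big_cat. Qed.

Lemma LfZ (V : lmodType K) (f : Kt -> V) c a : Lf f (c *: a) = c *: Lf f a.
Proof.
rewrite {1}(repP a) -lin_scs Lf_lin big_map scaler_sumr.
by apply: eq_bigr => p _; rewrite scalerA.
Qed.

Lemma Lf_sm (V : lmodType K) (f : Kt -> V) m : Lf f (sm m) = f m.
Proof.
have -> : sm m = lin [:: (m, 1)] by rewrite /lin big_seq1 scale1r.
by rewrite Lf_lin big_seq1 scale1r.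
Qed.

Definition islin (V : lmodType K) (L : A -> V) :=
  (forall a b, L (a + b) = L a + L b) /\ (forall c a, L (c *: a) = c *: L a).

Lemma islin_Lf (V : lmodType K) (f : Kt -> V) : islin (Lf f).
Proof. by split; [apply: LfD | apply: LfZ]. Qed.

Lemma islin0 (V : lmodType K) (L : A -> V) : islin L -> L 0 = 0.
Proof. by case=> H _; apply: (addrI (L 0)); rewrite -H !addr0. Qed.

Lemma islin_lin (V : lmodType K) (L : A -> V) s : islin L ->
  L (lin s) = \sum_(p <- s) p.2 *: L (sm p.1).
Proof.
move=> HL; elim: s => [|p s IH]; first by rewrite /lin !big_nil islin0.
by rewrite /lin !big_cons HL.1 HL.2 -IH.
Qed.

Lemma lin_ext (V : lmodType K) (L1 L2 : A -> V) : islin L1 -> islin L2 ->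
  (forall m, L1 (sm m) = L2 (sm m)) -> forall a, L1 a = L2 a.
Proof.
move=> H1 H2 H a; rewrite (repP a) (islin_lin _ H1) (islin_lin _ H2).
by apply: eq_bigr => p _; rewrite H.
Qed.

Lemma islin_mul u v : islin (fun a : A => u * a * v).
Proof.
split=> [a b|c a]; first by rewrite mulrDr mulrDl.
by rewrite -scalerAr -scalerAl.
Qed.

Lemma islin_comp (L1 L2 : A -> A) : islin L1 -> islin L2 -> islin (fun a => L1 (L2 a)).
Proof. by move=> [h1 h2] [h3 h4]; split=> *; rewrite ?h3 ?h1 ?h4 ?h2. Qed.

Lemma islinB (L1 L2 : A -> A) : islin L1 -> islin L2 -> islin (fun a => L1 a - L2 a).
Proof.
move=> [h1 h2] [h3 h4]; split=> *; rewrite ?h1 ?h3 ?h2 ?h4.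
  by rewrite opprD addrACA.
by rewrite scalerBr.
Qed.

Definition coef (a : A) (m : Kt) : K := @Lf K^o (fun m' => ((m' == m)%:R : K^o)) a.

Lemma coef_lin s m : coef (lin s) m = \sum_(p <- s | p.1 == m) p.2.
Proof.
rewrite /coef Lf_lin [RHS]big_mkcond; apply: eq_bigr => p _.
by case: eqP => _; rewrite /GRing.scale /= ?mulr1 ?mulr0.
Qed.

Lemma cfD a b m : coef (a + b) m = coef a m + coef b m.
Proof. by rewrite /coef LfD. Qed.
Lemma cfZ c a m : coef (c *: a) m = c * coef a m.
Proof. by rewrite /coef LfZ. Qed.
Lemma coef_sm m m' : coef (sm m) m' = (m == m')%:R.
Proof. by rewrite /coef Lf_sm. Qed.

Lemma lin_group s : lin s = \sum_(k <- undup (map fst s)) coef (lin s) k *: sm k.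
Proof.
rewrite {1}/lin group_sum; apply: eq_bigr => k _.
by rewrite coef_lin scaler_suml; apply: eq_bigr => p /eqP ->.
Qed.

Lemma coef_eq0 a : (forall m, coef a m = 0) -> a = 0.
Proof.
move=> H; rewrite (repP a) lin_group -repP big1 // => k _.
by rewrite H scale0r.
Qed.

Lemma coef_supp s m : coef (lin s) m != 0 -> m \in map fst s.
Proof.
rewrite coef_lin; apply: contraR => H; rewrite big1_seq // => p /andP[/eqP e ps].
by case/negP: H; rewrite -e; apply: map_f.
Qed.

Lemma Lf_coef (V : lmodType K) (f : Kt -> V) s :
  Lf f (lin s) = \sum_(k <- undup (map fst s)) coef (lin s) k *: f k.
Proof.
rewrite Lf_lin group_sum; apply: eq_bigr => k _.
by rewrite coef_lin scaler_suml; apply: eq_bigr => p /eqP ->.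
Qed.

Definition Dl i (a : A) := a - x i * a * y i.
Definition DD (r : seq 'I_n) (a : A) := foldr Dl a r.

Lemma islin_Dl i : islin (Dl i).
Proof. by apply: islinB; [split | apply: islin_mul]. Qed.

Lemma islin_DD r : islin (DD r).
Proof. by elim: r => [|i r IH] /=; [split | apply: islin_comp; [apply: islin_Dl|]]. Qed.

Lemma DDD r a b : DD r (a + b) = DD r a + DD r b.
Proof. by case: (islin_DD r) => h _; apply: h. Qed.
Lemma DDZ r c a : DD r (c *: a) = c *: DD r a.
Proof. by case: (islin_DD r) => _ h; apply: h. Qed.

Lemma islin_sum (L : A -> A) (I : Type) (s : seq I) (P : pred I) (F : I -> A) :
  islin L -> L (\sum_(t <- s | P t) F t) = \sum_(t <- s | P t) L (F t).
Proof. by move=> HL; apply: (big_morph L HL.1 (islin0 HL)). Qed.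

Lemma Dl_sm i m : Dl i (sm m) = sm m - sm (kshift i m).
Proof. by rewrite /Dl sm_shift. Qed.

Definition Loc j (z : A) := forall i, i != j -> GRing.comm z (x i) /\ GRing.comm z (y i).

Lemma LocS j k l : Loc j (gS j k l).
Proof.
move=> i ij; split; apply: commr_sym; apply: commS.
all: first [apply: cxx' | apply: cxy' | apply: cyx' | apply: cyy']; by [].
Qed.

Lemma LocF j k l : Loc j (gF j k l).
Proof.
move=> i ij; split; apply: commr_sym; apply: commF.
all: first [apply: cxx' | apply: cxy' | apply: cyx' | apply: cyy']; by [].
Qed.

Lemma Dl_prod (G : 'I_n -> A) i : (forall j, Loc j (G j)) ->
  Dl i (\prod_(j < n) G j) = \prod_(j < n) (if j == i then Dl i (G j) else G j).
Proof.
move=> HG; rewrite /Dl (@prod_rep _ _ _ G i) ?index_enum_uniq ?mem_index_enum //; last first.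
  move=> j _ ji; rewrite eq_sym in ji; have [h1 h2] := HG j i ji.
  by split; [apply: commr_sym|].
have -> : \prod_(j < n) (if j == i then G j - x i * G j * y i else G j) =
   \prod_(j < n) (if j == i then G i - x i * G i * y i else G j).
  by apply: eq_bigr => j _; case: eqP => // ->.
rewrite prod_lin1 ?index_enum_uniq ?mem_index_enum //; congr (_ - _).
all: by apply: eq_bigr => j _; case: eqP => // ->.
Qed.

Lemma Dl_gS i k l : Dl i (gS i k l) = gF i k l.
Proof. by rewrite /Dl /Defs.gF /Defs.gS exprS exprSr !mulrA. Qed.

Lemma DD_prod (r : seq 'I_n) (k l : {ffun 'I_n -> nat}) : uniq r ->
  DD r (sm (k, l)) = \prod_(j < n) (if j \in r then gF j (k j) (l j) else gS j (k j) (l j)).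
Proof.
elim: r => [|i r IH] /=; first by move=> _; rewrite /sm /smon.
case/andP=> ir ur; rewrite IH // Dl_prod; last first.
  by move=> j; case: (j \in r); [apply: LocF | apply: LocS].
apply: eq_bigr => j _; rewrite inE; case: eqP => [->|//].
by rewrite (negbTE ir) Dl_gS.
Qed.

Definition Im (r : seq 'I_n) (a : A) := exists b, a = DD r b.

Lemma sum_nth (T : Type) (d : T) (s : seq T) (F : T -> A) :
  \sum_(p <- s) F p = \sum_(t < size s) F (nth d s t).
Proof. by rewrite (big_nth d) big_mkord. Qed.

Lemma Im_sum (r : seq 'I_n) (I : Type) (s : seq I) (F : I -> A) :
  (forall t, Im r (F t)) -> Im r (\sum_(t <- s) F t).
Proof.
move=> H; elim: s => [|t s [b IH]]; first by exists 0; rewrite big_nil (islin0 (islin_DD r)).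
rewrite big_cons IH; have [b' ->] := H t; exists (b' + b); by rewrite DDD.
Qed.

Lemma Im_scale r c a : Im r a -> Im r (c *: a).
Proof. by case=> b ->; exists (c *: b); rewrite DDZ. Qed.

Lemma Im_gen (r : seq 'I_n) (d : 'I_n -> bool) :
  uniq r -> (forall j, d j = (j \in r)) ->
  forall a, (exists m (c : 'I_m -> K) (k l : 'I_m -> 'I_n -> nat),
    a = \sum_(t < m) c t *: \prod_(j < n) (if d j then gF j (k t j) (l t j) else gS j (k t j) (l t j)))
  <-> Im r a.
Proof.
move=> ur hd a; split.
  case=> m [c [k [l ->]]]; apply: Im_sum => t; apply: Im_scale.
  exists (sm ([ffun j => k t j], [ffun j => l t j])); rewrite DD_prod //.
  by apply: eq_bigr => j _; rewrite hd !ffunE.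
case=> b ->; rewrite (repP b) (islin_lin _ (islin_DD r)).
exists (size (rep b)), (fun t => (nth (k0, 0) (rep b) t).2),
  (fun t j => (nth (k0, 0) (rep b) t).1.1 j), (fun t j => (nth (k0, 0) (rep b) t).1.2 j).
rewrite (sum_nth (k0, 0)); apply: eq_bigr => t _.
case: (nth (k0, 0) (rep b) t) => [[k l] c] /=; rewrite DD_prod //.
by congr (_ *: _); apply: eq_bigr => j _; rewrite hd.
Qed.

Lemma pidE i a : pid x y i a <-> Im [:: i] a.
Proof. by apply: Im_gen => // j; rewrite inE. Qed.

Lemma FtensE a : Ftens x y a <-> Im (index_enum 'I_n) a.
Proof.
exact: (@Im_gen (index_enum 'I_n) (fun _ => true) (index_enum_uniq _)
  (fun j => esym (mem_index_enum j)) a).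
Qed.

Lemma islinB' (V : lmodType K) (L : A -> V) a b : islin L -> L (a - b) = L a - L b.
Proof.
move=> [h1 h2]; rewrite h1; have -> : - b = (-1) *: b by rewrite scaleN1r.
by rewrite h2 scaleN1r.
Qed.

Lemma Im_lin r (L : A -> A) : islin L -> (forall m, Im r (L (sm m))) -> forall b, Im r (L b).
Proof.
move=> HL H b; rewrite (repP b) (islin_lin _ HL); apply: Im_sum => p.
exact: Im_scale.
Qed.

Ltac keq i := congr pair; apply/ffunP; let j := fresh "j" in intro j; rewrite !ffunE;
  let ji := fresh "ji" in
  case: (eqVneq j i) => [->|ji]; rewrite /= ?eqxx ?(negbTE ji) /=; nlia.

Lemma kmul_shift_l (m m' : Kt) i : (m.2 i <= m'.1 i)%N ->
  kmul m (kshift i m') = kshift i (kmul m m').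
Proof. by move=> h; rewrite /kmul /kshift /dl /=; keq i. Qed.

Lemma kmul_shift_l' (m m' : Kt) i : ~~ (m.2 i <= m'.1 i)%N ->
  kmul m (kshift i m') = kmul m m'.
Proof. by move=> h; rewrite /kmul /kshift /dl /=; keq i. Qed.

Lemma kmul_shift_r (m m' : Kt) i : (m.1 i <= m'.2 i)%N ->
  kmul (kshift i m') m = kshift i (kmul m' m).
Proof. by move=> h; rewrite /kmul /kshift /dl /=; keq i. Qed.

Lemma kmul_shift_r' (m m' : Kt) i : ~~ (m.1 i <= m'.2 i)%N ->
  kmul (kshift i m') m = kmul m' m.
Proof. by move=> h; rewrite /kmul /kshift /dl /=; keq i. Qed.

Lemma Dl_mull i m b : Im [:: i] (sm m * Dl i b).
Proof.
apply: (Im_lin (L := fun b => sm m * Dl i b)).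
  by apply: islin_comp; [have := islin_mul (sm m) 1; rewrite /islin; setoid_rewrite mulr1|apply: islin_Dl].
move=> m'; rewrite Dl_sm mulrBr !sm_mul.
case: (leqP (m.2 i) (m'.1 i)) => h.
  by exists (sm (kmul m m')); rewrite /= Dl_sm kmul_shift_l.
by exists 0; rewrite kmul_shift_l' -?ltnNge // subrr /= /Dl mulr0 mul0r subrr.
Qed.

Lemma islin_lm z : islin (fun c : A => z * c).
Proof. by split=> *; rewrite ?mulrDr ?scalerAr. Qed.
Lemma islin_rm z : islin (fun c : A => c * z).
Proof. by split=> *; rewrite ?mulrDl ?scalerAl. Qed.

Lemma Dl_mulr i m b : Im [:: i] (Dl i b * sm m).
Proof.
apply: (Im_lin (L := fun b => Dl i b * sm m)).
  exact: (@islin_comp (fun c => c * sm m) (Dl i) (islin_rm _) (islin_Dl i)).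
move=> m'; rewrite Dl_sm mulrBl !sm_mul.
case: (leqP (m.1 i) (m'.2 i)) => h.
  by exists (sm (kmul m' m)); rewrite /= Dl_sm kmul_shift_r.
by exists 0; rewrite kmul_shift_r' -?ltnNge // subrr /= /Dl mulr0 mul0r subrr.
Qed.

Lemma pid_ideal i : is_ideal (Im [:: i]).
Proof.
split.
- by exists 0; rewrite /= /Dl mulr0 mul0r subrr.
- by move=> a b [a' ->] [b' ->]; exists (a' + b'); rewrite DDD.
- by move=> a [a' ->]; exists (- a'); rewrite -[- a']scaleN1r DDZ scaleN1r.
move=> c a [b ->]; split.
  by apply: (Im_lin (L := fun c => c * DD [:: i] b)) => [|m]; [apply: islin_rm | apply: Dl_mull].
by apply: (Im_lin (L := fun c => DD [:: i] b * c)) => [|m]; [apply: islin_lm | apply: Dl_mulr].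
Qed.

Definition kred i (m : Kt) : Kt :=
  ([ffun j => if j == i then (m.1 j - m.2 j)%N else m.1 j],
   [ffun j => if j == i then (m.2 j - m.1 j)%N else m.2 j]).
Definition kset i (m : Kt) (a b : nat) : Kt :=
  ([ffun j => if j == i then a else m.1 j], [ffun j => if j == i then b else m.2 j]).
Definition mn i (m : Kt) := minn (m.1 i) (m.2 i).
Definition kt i (m : Kt) t := kset i m (m.1 i - mn i m + t)%N (m.2 i - mn i m + t)%N.

Definition pr i := Lf (fun m => sm (kred i m)).
Definition sg i := Lf (fun m => - \sum_(t < mn i m) sm (kt i m t)).

Lemma pr_sm i m : pr i (sm m) = sm (kred i m). Proof. exact: Lf_sm. Qed.
Lemma sg_sm i m : sg i (sm m) = - \sum_(t < mn i m) sm (kt i m t). Proof. exact: Lf_sm. Qed.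
Lemma islin_pr i : islin (pr i). Proof. exact: islin_Lf. Qed.
Lemma islin_sg i : islin (sg i). Proof. exact: islin_Lf. Qed.
Lemma islin_id : islin (fun a : A => a). Proof. by []. Qed.
Lemma islin_0 : islin (fun a : A => (0 : A)). Proof. by split=> *; rewrite ?addr0 ?scaler0. Qed.

Lemma kred_shift i m : kred i (kshift i m) = kred i m.
Proof. by rewrite /kred /kshift /dl; keq i. Qed.

Lemma pr_Dl i b : pr i (Dl i b) = 0.
Proof.
apply: (@lin_ext _ (fun b => pr i (Dl i b)) (fun _ => 0)) => [||m].
- exact: (islin_comp (islin_pr i) (islin_Dl i)).
- exact: islin_0.
by rewrite Dl_sm (islinB' _ _ (islin_pr i)) !pr_sm kred_shift subrr.
Qed.

Lemma kshift_kt i m t : kshift i (kt i m t) = kt i m t.+1.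
Proof.
rewrite /kshift /kt /kset /dl; congr pair; apply/ffunP => j; rewrite !ffunE;
by case: (j == i) => /=; nlia.
Qed.

Lemma kt_mn i m : kt i m (mn i m) = m.
Proof.
case: m => a b; rewrite /kt /kset /mn /=; congr pair; apply/ffunP => j; rewrite !ffunE;
case: (eqVneq j i) => [->|ji]; rewrite ?eqxx ?(negbTE ji) //=; rewrite /minn; case: ltnP => h; nlia.
Qed.

Lemma kt_0 i m : kt i m 0 = kred i m.
Proof.
case: m => a b; rewrite /kt /kset /kred /mn /=; congr pair; apply/ffunP => j; rewrite !ffunE;
case: (eqVneq j i) => [->|ji]; rewrite ?eqxx ?(negbTE ji) //=; rewrite /minn; case: ltnP => h; nlia.
Qed.

Lemma Dl_sg i a : a - pr i a = Dl i (sg i a).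
Proof.
apply: (@lin_ext _ (fun a => a - pr i a) (fun a => Dl i (sg i a))) => [||m].
- exact: (islinB islin_id (islin_pr i)).
- exact: (islin_comp (islin_Dl i) (islin_sg i)).
have DlN z : Dl i (- z) = - Dl i z by rewrite /Dl mulrN mulNr opprD.
rewrite pr_sm sg_sm DlN (islin_sum _ _ _ (islin_Dl i)).
under eq_bigr do rewrite Dl_sm kshift_kt.
rewrite -sumrN; under eq_bigr do rewrite opprB.
rewrite -(big_mkord xpredT (fun t => sm (kt i m t.+1) - sm (kt i m t))).
by rewrite telescope_sumr // kt_mn kt_0.
Qed.

Lemma pid_pr i a : Im [:: i] a <-> pr i a = 0.
Proof.
split; first by case=> b ->; apply: pr_Dl.
by move=> h; exists (sg i a); rewrite /= -Dl_sg h subr0.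
Qed.

Lemma islinN (V : lmodType K) (L : A -> V) a : islin L -> L (- a) = - L a.
Proof. by move=> HL; rewrite -sub0r islinB' // islin0 // sub0r. Qed.

Lemma ideal_sub (I : A -> Prop) a b : is_ideal I -> I a -> I b -> I (a - b).
Proof. by case=> _ hD hN _ ha hb; apply: hD => //; apply: hN. Qed.
Lemma ideal_mull (I : A -> Prop) r a : is_ideal I -> I a -> I (r * a).
Proof. by case=> _ _ _ h ha; case: (h r a ha). Qed.
Lemma ideal_mulr (I : A -> Prop) r a : is_ideal I -> I a -> I (a * r).
Proof. by case=> _ _ _ h ha; case: (h r a ha). Qed.
Lemma ideal_Dl (I : A -> Prop) i a : is_ideal I -> I a -> I (Dl i a).
Proof. by move=> hI ha; apply: ideal_sub => //; apply: ideal_mulr => //; apply: ideal_mull. Qed.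

Lemma pr_sg_comm i j a : i != j -> pr j (sg i a) = sg i (pr j a).
Proof.
move=> ij; apply: (@lin_ext _ (fun a => pr j (sg i a)) (fun a => sg i (pr j a))) => [||m].
- exact: (islin_comp (islin_pr j) (islin_sg i)).
- exact: (islin_comp (islin_sg i) (islin_pr j)).
have ji : (i == j) = false by apply/negbTE.
rewrite sg_sm pr_sm sg_sm (islinN _ (islin_pr j)) (islin_sum _ _ _ (islin_pr j)).
have -> : mn i (kred j m) = mn i m by rewrite /mn /kred !ffunE ji.
congr (- _); apply: eq_bigr => t _; rewrite pr_sm; congr sm.
rewrite /kred /kt /kset /mn !ffunE ji /=; congr pair; apply/ffunP => k; rewrite !ffunE;
case: (eqVneq k i) => [->|ki]; rewrite ?ji //; by case: (k == j).
Qed.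

Lemma inter_Im (r : seq 'I_n) a : uniq r -> (forall j, j \in r -> Im [:: j] a) -> Im r a.
Proof.
elim: r a => [|i r IH] a; first by move=> _ _; exists a.
case/andP=> ir ur H.
have pa : pr i a = 0 by apply/pid_pr; apply: H; rewrite inE eqxx.
have [b eb] : Im r (sg i a).
  apply: IH => // j jr; apply/pid_pr.
  have ij : i != j by apply/eqP=> e; move: ir; rewrite e jr.
  rewrite pr_sg_comm //; have /pid_pr -> : Im [:: j] a by apply: H; rewrite inE jr orbT.
  exact: islin0 (islin_sg i).
by exists b; rewrite /= -eb -Dl_sg pa subr0.
Qed.

Lemma Im_inter (r : seq 'I_n) a : Im r a -> forall j, j \in r -> Im [:: j] a.
Proof.
elim: r a => [|i r IH] a [b ->] j //; rewrite inE => /orP[/eqP ->|jr].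
  by exists (DD r b).
apply: ideal_Dl; first exact: pid_ideal.
by apply: IH => //; exists b.
Qed.

Definition B j (a : A) := forall z, GRing.comm z (x j) -> GRing.comm z (y j) -> GRing.comm z a.
Lemma B1 j : B j 1. Proof. by move=> z _ _; apply: commr1. Qed.
Lemma B0 j : B j 0. Proof. by move=> z _ _; apply: commr0. Qed.
Lemma BM j a b : B j a -> B j b -> B j (a * b).
Proof. by move=> ha hb z h1 h2; apply: commrM; [apply: ha | apply: hb]. Qed.
Lemma BS j k l : B j (gS j k l). Proof. by move=> z h1 h2; apply: commS. Qed.
Lemma BF j k l : B j (gF j k l). Proof. by move=> z h1 h2; apply: commF. Qed.
Lemma B_comm j j' a b : j != j' -> B j a -> B j' b -> GRing.comm a b.
Proof.
move=> jj' ha hb; apply: hb; apply: commr_sym; apply: ha.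
- by apply: cxx'; rewrite eq_sym.
- by apply: cxy'; rewrite eq_sym.
- by apply: cyx'; rewrite eq_sym.
- by apply: cyy'; rewrite eq_sym.
Qed.

Lemma prod_parB (F G : 'I_n -> A) : (forall j, B j (F j)) -> (forall j, B j (G j)) ->
  \prod_(j < n) F j * \prod_(j < n) G j = \prod_(j < n) (F j * G j).
Proof.
move=> hF hG; apply: prod_par; first exact: index_enum_uniq.
by move=> j j' _ _ jj'; apply: (B_comm (j := j')); rewrite // eq_sym.
Qed.

Lemma prod0 (I : eqType) (r : seq I) (F : I -> A) j : j \in r -> F j = 0 -> \prod_(i <- r) F i = 0.
Proof.
elim: r => [|a r IH] //; rewrite inE big_cons => /orP[/eqP <- -> | jr H].
  by rewrite mul0r.
by rewrite IH ?mulr0.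
Qed.

Lemma gF00 j : gF j 0 0 = 1 - x j * y j.
Proof. by rewrite /Defs.gF /Defs.gS !expr0 !expr1 mulr1. Qed.

Lemma e_gS_e j a b : gF j 0 0 * gS j a b * gF j 0 0 =
  if (a == 0%N) && (b == 0%N) then gF j 0 0 else 0.
Proof.
rewrite gF00 /Defs.gS; set e := 1 - x j * y j.
have ex : e * x j = 0 by rewrite /e mulrBl mul1r -mulrA yx1 mulr1 subrr.
have ye : y j * e = 0 by rewrite /e mulrBr mulr1 mulrA yx1 mul1r subrr.
have ee : e * e = e by rewrite {2}/e mulrBr mulr1 mulrA ex mul0r subr0.
case: a => [|a] /=.
  case: b => [|b] /=; first by rewrite !expr0 !mulr1 ee.
  by rewrite expr0 mul1r exprSr -!mulrA ye !mulr0.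
by rewrite exprS !mulrA ex !mul0r.
Qed.

Definition cnd (k l p q : nat) : bool := (k <= p)%N && (l + p == q + k)%N.
Definition uu (S : pred 'I_n) (p : 'I_n -> nat) :=
  \prod_(j < n) (if S j then gF j 0 0 * gS j 0 (p j) else 1).
Definition vv (S : pred 'I_n) (q : 'I_n -> nat) N :=
  \prod_(j < n) (if S j then gS j (q j) 0 * gF j 0 0 else gS j N 0).
Definition Wm (S : pred 'I_n) N (m : Kt) :=
  \prod_(j < n) (if S j then gF j 0 0 else gS j (m.1 j + (N - m.2 j)) (m.2 j - N)).
Definition condS (S : pred 'I_n) (p q : 'I_n -> nat) (m : Kt) :=
  [forall j, S j ==> cnd (m.1 j) (m.2 j) (p j) (q j)].

Lemma cndE k l p q :
  ((0 + (k - p) + (q - ((p - k) + l)) == 0) && ((((p - k) + l) - q + 0) == 0))%N = cnd k l p q.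
Proof.
rewrite /cnd; apply/idP/idP => /andP[h1 h2]; apply/andP; split; nlia.
Qed.

Lemma uv_sm S p q N m :
  uu S p * sm m * vv S q N = if condS S p q m then Wm S N m else 0.
Proof.
have BU j : B j (if S j then gF j 0 0 * gS j 0 (p j) else 1).
  by case: (S j); [apply: BM; [apply: BF | apply: BS] | apply: B1].
have BV j : B j (if S j then gS j (q j) 0 * gF j 0 0 else gS j N 0).
  by case: (S j); [apply: BM; [apply: BS | apply: BF] | apply: BS].
rewrite /uu /sm /smon prod_parB //; last by move=> j; apply: BS.
rewrite /vv prod_parB //; last by move=> j; apply: BM => //; apply: BS.
have -> : \prod_(j < n) ((if S j then gF j 0 0 * gS j 0 (p j) else 1) * gS j (m.1 j) (m.2 j) *
     (if S j then gS j (q j) 0 * gF j 0 0 else gS j N 0)) =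
   \prod_(j < n) (if S j then (if cnd (m.1 j) (m.2 j) (p j) (q j) then gF j 0 0 else 0)
        else gS j (m.1 j + (N - m.2 j)) (m.2 j - N)).
  apply: eq_bigr => j _; case: (S j).
    have asc (e s1 s2 s3 : A) : (e * s1) * s2 * (s3 * e) = e * (s1 * s2 * s3) * e.
      by rewrite !mulrA.
    by rewrite asc !gS_mul e_gS_e cndE.
  by rewrite mul1r gS_mul addn0.
case: (boolP (condS S p q m)) => hc.
  apply: eq_bigr => j _; case hS: (S j) => //.
  by move/forallP: hc => /(_ j); rewrite hS /= => ->.
move/forallPn: hc => [j]; rewrite negb_imply => /andP[hS hn].
by apply: (prod0 (j := j)); rewrite ?mem_index_enum // hS (negbTE hn).
Qed.

Lemma sum_eq_le (S : pred 'I_n) (f g : 'I_n -> nat) :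
  (forall j, S j -> f j <= g j)%N -> (\sum_(j < n | S j) g j <= \sum_(j < n | S j) f j)%N ->
  forall j, S j -> f j = g j.
Proof.
move=> hle hs j0 Sj0; apply/eqP; rewrite eqn_leq hle //=; rewrite leqNgt; apply/negP => hlt.
move: hs; rewrite (bigD1 j0) //= [X in (_ <= X)%N](bigD1 j0) //=.
have : (\sum_(j < n | S j && (j != j0)) f j <= \sum_(j < n | S j && (j != j0)) g j)%N.
  by apply: leq_sum => j /andP[Sj _]; apply: hle.
move: hlt; set a := \sum_(j < n | _) f j; set b := \sum_(j < n | _) g j => hlt h1 h2.
nlia.
Qed.

Definition sumS (S : pred 'I_n) (k : Kt) := (\sum_(j < n | S j) k.1 j)%N.
Definition diag (S : pred 'I_n) (k m : Kt) := [forall j, S j ==> (k.2 j + m.1 j == m.2 j + k.1 j)%N].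

Lemma cond_refl S (m : Kt) : condS S m.1 m.2 m.
Proof. by apply/forallP => j; apply/implyP => _; rewrite /cnd leqnn addnC eqxx. Qed.

Lemma pick_min S s m0 : coef (lin s) m0 != 0 -> exists ms : Kt, coef (lin s) ms != 0 /\
  (forall k, coef (lin s) k != 0 -> condS S ms.1 ms.2 k ->
     forall j, S j -> k.1 j = ms.1 j /\ k.2 j = ms.2 j).
Proof.
move=> h0.
pose P N := has (fun k => [&& diag S k m0, coef (lin s) k != 0 & sumS S k == N]) (map fst s).
have exP : exists N, P N.
  exists (sumS S m0); apply/hasP; exists m0; first exact: coef_supp.
  apply/and3P; split => //; apply/forallP => j; apply/implyP => _; by rewrite addnC.
case: (ex_minnP exP) => N /hasP [ms msin /and3P [dms cms /eqP sms]] hmin.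
exists ms; split => // k ck condk.
have kin := coef_supp ck.
have dk : diag S k m0.
  apply/forallP => j; apply/implyP => Sj.
  move/forallP: dms => /(_ j); rewrite Sj /= => h1.
  move/forallP: condk => /(_ j); rewrite Sj /= => /andP[_ h2].
  nlia.
have PK : P (sumS S k) by apply/hasP; exists k => //; rewrite dk ck eqxx.
have le1 := hmin _ PK.
have hle : forall j, S j -> (k.1 j <= ms.1 j)%N.
  by move=> j Sj; move/forallP: condk => /(_ j); rewrite Sj /= => /andP[].
have E := sum_eq_le hle; rewrite -/(sumS S k) -/(sumS S ms) sms in E.
move=> j Sj; have e1 := E le1 j Sj; split => //.
move/forallP: condk => /(_ j); rewrite Sj /= => /andP[_ h2]; rewrite e1 in h2.
by apply/eqP; rewrite -(eqn_add2r (ms.1 j)).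
Qed.

Lemma islin_coef (L : A -> A) s : islin L ->
  L (lin s) = \sum_(k <- undup (map fst s)) coef (lin s) k *: L (sm k).
Proof.
move=> HL; rewrite (islin_lin _ HL) group_sum; apply: eq_bigr => k _.
by rewrite coef_lin scaler_suml; apply: eq_bigr => p /eqP ->.
Qed.

Lemma ideal_scale (I : A -> Prop) c z : is_ideal I -> I z -> I (c *: z).
Proof.
move=> hI hz; have -> : c *: z = (c *: 1) * z by rewrite -scalerAl mul1r.
exact: ideal_mull.
Qed.

Lemma ideal_sum (I : A -> Prop) (T : Type) (r : seq T) (F : T -> A) :
  is_ideal I -> (forall t, I (F t)) -> I (\sum_(t <- r) F t).
Proof.
move=> hI hF; elim: r => [|t r IH]; first by rewrite big_nil; case: hI.
by rewrite big_cons; case: hI => _ hD _ _; apply: hD.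
Qed.

Lemma Kt_eq (k m : Kt) : (forall j, k.1 j = m.1 j /\ k.2 j = m.2 j) -> k = m.
Proof.
case: k m => [k1 k2] [m1 m2] /= H; congr pair; apply/ffunP => j; by case: (H j).
Qed.

Definition E0 := \prod_(j < n) gF j 0 0.

Lemma nz_coef a : a != 0 -> exists m, coef (lin (rep a)) m != 0.
Proof.
move=> an; apply: NNPP => H; case/negP: an; apply/eqP; rewrite (repP a).
by apply: coef_eq0 => m; apply/eqP/negPn/negP => hm; apply: H; exists m.
Qed.

Lemma K1_E0 (I : A -> Prop) a : is_ideal I -> I a -> a != 0 -> I E0.
Proof.
move=> hI ha an; have [m0 hm0] := nz_coef an.
set s := rep a in hm0.
have [ms [cms hms]] := pick_min predT hm0.
have H : uu predT ms.1 * a * vv predT ms.2 0 = coef (lin s) ms *: E0.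
  rewrite (repP a) -/s (islin_coef _ (islin_mul _ _)).
  under eq_bigr do rewrite uv_sm.
  rewrite (bigD1_seq ms) ?undup_uniq //=; last by rewrite mem_undup coef_supp.
  rewrite cond_refl big1 ?addr0.
    by congr (_ *: _); apply: eq_bigr.
  move=> k kms; case: (eqVneq (coef (lin s) k) 0) => [->|ck]; first by rewrite scale0r.
  case: ifP => [cd|_]; last by rewrite scaler0.
  by case/eqP: kms; apply: Kt_eq => j; apply: hms.
have : I (coef (lin s) ms *: E0).
  by rewrite -H; apply: ideal_mulr => //; apply: ideal_mull.
move/(ideal_scale ((coef (lin s) ms)^-1) hI); by rewrite scalerA mulVf ?scale1r.
Qed.

Lemma gF_split j k l : gS j k 0 * gF j 0 0 * gS j 0 l = gF j k l.
Proof.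
rewrite gF00 /Defs.gF /Defs.gS !expr0 !mulr1 !mul1r mulrBr mulr1 mulrBl.
by rewrite exprSr exprS !mulrA.
Qed.

Lemma Ftens_sub (I : A -> Prop) : is_ideal I -> I E0 -> forall z, Ftens x y z -> I z.
Proof.
move=> hI hE z [m [c [k [l ->]]]]; apply: ideal_sum => // t; apply: ideal_scale => //.
have -> : \prod_(j < n) gF j (k t j) (l t j) =
   (\prod_(j < n) gS j (k t j) 0) * E0 * (\prod_(j < n) gS j 0 (l t j)).
  rewrite /E0 prod_parB; last by move=> j; apply: BF. 2: by move=> j; apply: BS.
  rewrite prod_parB; last by move=> j; apply: BS. 2: by move=> j; apply: BM; [apply: BS|apply: BF].
  by apply: eq_bigr => j _; rewrite gF_split.
by apply: ideal_mulr => //; apply: ideal_mull.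
Qed.

Definition kx i e : Kt := ([ffun j => if j == i then e else 0%N], [ffun=> 0%N]).
Definition Ep i := \prod_(j < n) (if j != i then gF j 0 0 else 1).
Definition rr i := [seq j <- index_enum 'I_n | j != i].

Lemma sm_kx i e : sm (kx i e) = x i ^+ e.
Proof.
rewrite /sm /smon -[RHS](prod_if1 i); apply: eq_bigr => j _.
by rewrite /Defs.gS !ffunE expr0 mulr1; case: eqP => [->|_]; rewrite ?expr0.
Qed.

Lemma Ep_gS i d d' : Ep i * gS i d d' = \prod_(j < n) (if j != i then gF j 0 0 else gS i d d').
Proof.
rewrite -{1}(prod_if1 i (gS i d d')) /Ep prod_parB.
- by apply: eq_bigr => j _; case: eqP => [->|_]; rewrite ?mul1r ?mulr1.
- by move=> j; case: eqP => _; [apply: B1 | apply: BF].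
by move=> j; case: eqP => [->|_]; [apply: BS | apply: B1].
Qed.

Lemma Wm_Ep i N (k : Kt) :
  Wm (fun j => j != i) N k = Ep i * gS i (k.1 i + (N - k.2 i)) (k.2 i - N).
Proof. by rewrite Ep_gS; apply: eq_bigr => j _; case: eqP => [->|]. Qed.

Lemma DD_Ep i e : DD (rr i) (sm (kx i e)) = Ep i * x i ^+ e.
Proof.
rewrite DD_prod ?filter_uniq ?index_enum_uniq //.
have -> : x i ^+ e = gS i e 0 by rewrite /Defs.gS expr0 mulr1.
rewrite Ep_gS; apply: eq_bigr => j _; rewrite mem_filter mem_index_enum andbT !ffunE.
by case: eqP => [->|].
Qed.

Lemma kred_kshift i j m : i != j -> kred i (kshift j m) = kshift j (kred i m).
Proof.
move=> ij; rewrite /kred /kshift /dl; congr pair; apply/ffunP => k; rewrite !ffunE;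
case: (eqVneq k i) => [->|ki]; rewrite ?(negbTE ij) ?addn0 //; by rewrite (negbTE ki).
Qed.

Lemma pr_Dl_comm i j z : i != j -> pr i (Dl j z) = Dl j (pr i z).
Proof.
move=> ij; apply: (@lin_ext _ (fun z => pr i (Dl j z)) (fun z => Dl j (pr i z))) => [||m].
- exact: (islin_comp (islin_pr i) (islin_Dl j)).
- exact: (islin_comp (islin_Dl j) (islin_pr i)).
by rewrite Dl_sm (islinB' _ _ (islin_pr i)) !pr_sm Dl_sm kred_kshift.
Qed.

Lemma pr_DD i r z : i \notin r -> pr i (DD r z) = DD r (pr i z).
Proof.
elim: r => [|j r IH] //=; rewrite inE negb_or => /andP[ij ir].
by rewrite pr_Dl_comm ?IH // eq_sym.
Qed.

Lemma coef_Dl j z (m : Kt) : m.1 j = 0%N -> coef (Dl j z) m = coef z m.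
Proof.
move=> hm; rewrite /Dl cfD.
suff -> : coef (- (x j * z * y j)) m = 0 by rewrite addr0.
have HL : @islin K^o (fun z => coef (- (x j * z * y j)) m).
  split=> [a b|c a]; first by rewrite mulrDr mulrDl opprD cfD.
  by rewrite -scalerAr -scalerAl -scalerN cfZ.
rewrite (@lin_ext K^o _ (fun _ => (0 : K^o)) HL) //; first by split=> *; rewrite ?addr0 ?scaler0.
move=> m'; rewrite sm_shift -scaleN1r cfZ coef_sm.
case: eqP => [e|]; last by rewrite mulr0.
by move: hm; rewrite -e /kshift /dl !ffunE eqxx addn1.
Qed.

Lemma coef_DD r z (m : Kt) : (forall j, j \in r -> m.1 j = 0%N) -> coef (DD r z) m = coef z m.
Proof.
elim: r => [|j r IH] //= H; rewrite coef_Dl; last by apply: H; rewrite inE eqxx.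
by apply: IH => k kr; apply: H; rewrite inE kr orbT.
Qed.

Lemma cf_sum (T : Type) (r : seq T) (F : T -> A) m :
  coef (\sum_(t <- r) F t) m = \sum_(t <- r) coef (F t) m.
Proof.
apply: (big_morph (fun z => coef z m)) => [a b|]; first exact: cfD.
by have := cfZ 0 0 m; rewrite scale0r mul0r.
Qed.

Lemma kred_kx i e : kred i (kx i e) = kx i e.
Proof.
rewrite /kred /kx; congr pair; apply/ffunP => j; rewrite !ffunE;
by case: (eqVneq j i) => [ee|ji]; rewrite ?subn0 ?sub0n.
Qed.

Lemma kx_eq i e f : (kx i e == kx i f) = (e == f).
Proof.
apply/eqP/eqP => [h|->] //; have := congr1 (fun k : Kt => k.1 i) h.
by rewrite /kx /= !ffunE eqxx.
Qed.

Lemma i_notin_rr i : i \notin rr i.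
Proof. by rewrite mem_filter eqxx. Qed.

Lemma pr_Ep_xe i e : pr i (Ep i * x i ^+ e) = Ep i * x i ^+ e.
Proof. by rewrite -DD_Ep pr_DD ?i_notin_rr // pr_sm kred_kx. Qed.

Lemma coef_Ep_xe i e f : coef (Ep i * x i ^+ e) (kx i f) = (e == f)%:R.
Proof.
rewrite -DD_Ep coef_DD ?coef_sm ?kx_eq //.
by move=> j; rewrite mem_filter => /andP[ji _]; rewrite /kx ffunE (negbTE ji).
Qed.

Lemma hx_exp i (R : {poly K}) :
  horner_alg (x i) R = \sum_(e < size R) R`_e *: x i ^+ e.
Proof.
rewrite -{1}(coefK R) poly_def rmorph_sum; apply: eq_bigr => e _.
rewrite -mul_polyC rmorphM /= horner_algC rmorphXn -scalerAl mul1r.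
congr (_ *: (_ ^+ _)); exact: horner_algX.
Qed.

Lemma Ep_hx i R : Ep i * horner_alg (x i) R = \sum_(e < size R) R`_e *: (Ep i * x i ^+ e).
Proof. by rewrite hx_exp mulr_sumr; apply: eq_bigr => e _; rewrite scalerAr. Qed.

Lemma Ep_notin i R : Im [:: i] (Ep i * horner_alg (x i) R) -> R = 0.
Proof.
move/pid_pr; rewrite Ep_hx (islin_sum _ _ _ (islin_pr i)).
under eq_bigr do rewrite (islin_pr i).2 pr_Ep_xe.
move=> H; apply/polyP => f; rewrite coef0.
case: (ltnP f (size R)) => hf; last by rewrite nth_default.
have := congr1 (fun z => coef z (kx i f)) H; rewrite /= cf_sum.
under eq_bigr do rewrite cfZ coef_Ep_xe.
rewrite (bigD1 (Ordinal hf)) //= eqxx mulr1 big1 ?addr0.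
  by move=> ->; have := cfZ 0 0 (kx i f); rewrite scale0r mul0r.
by move=> e ne; rewrite -val_eqE /= in ne; rewrite (negbTE ne) mulr0.
Qed.

Lemma leq_sum_seq (T : eqType) (s : seq T) (f : T -> nat) p : p \in s -> (f p <= \sum_(q <- s) f q)%N.
Proof.
elim: s => [|q s IH] //; rewrite inE big_cons => /orP[/eqP ->|ps]; first exact: leq_addr.
by apply: leq_trans (IH ps) _; apply: leq_addl.
Qed.

Lemma nz_coef_lin s : lin s != 0 -> exists m, coef (lin s) m != 0.
Proof.
move=> an; apply: NNPP => H; case/negP: an; apply/eqP.
by apply: coef_eq0 => m; apply/eqP/negPn/negP => hm; apply: H; exists m.
Qed.

Lemma hx_Xn i e : horner_alg (x i) 'X^e = x i ^+ e.
Proof. by rewrite rmorphXn; congr (_ ^+ _); exact: horner_algX. Qed.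

Lemma stepA i a : pr i a != 0 -> exists u v (R : {poly K}),
  R != 0 /\ Im [:: i] (u * a * v - Ep i * horner_alg (x i) R).
Proof.
move=> ha.
set s := [seq (kred i p.1, p.2) | p <- rep a].
have Es : pr i a = lin s by rewrite /pr /Lf /lin big_map.
have red : forall k, k \in map fst s -> (k.1 i == 0%N) || (k.2 i == 0%N).
  move=> k /mapP [p /mapP [q _ ->] ->] /=; rewrite /kred !ffunE eqxx.
  by case: (leqP (q.1.1 i) (q.1.2 i)) => h; [rewrite (eqP h) | rewrite orbC (eqP (ltnW h))].
have [m0 hm0] : exists m, coef (lin s) m != 0 by apply: nz_coef_lin; rewrite -Es.
set S := fun j : 'I_n => j != i.
have [ms [cms hms]] := pick_min S hm0.
set N := \sum_(p <- s) p.1.2 i.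
have hN : forall k, k \in map fst s -> (k.2 i <= N)%N.
  by move=> k /mapP [p ps ->]; apply: (leq_sum_seq (fun p : Kt * K => p.1.2 i)).
clearbody N.
set U := undup (map fst s).
set d := fun k : Kt => (k.1 i + (N - k.2 i))%N.
set R := \sum_(k <- U) (coef (lin s) k * (condS S ms.1 ms.2 k)%:R) *: 'X^(d k).
exists (uu S ms.1), (vv S ms.2 N), R; split.
  apply/eqP => /(congr1 (fun P : {poly K} => P`_(d ms))); rewrite coef0 coef_sum.
  rewrite (bigD1_seq ms) ?undup_uniq ?mem_undup ?coef_supp //= coefZ coefXn eqxx cond_refl !mulr1.
  rewrite big1 ?addr0; first by apply/eqP.
  move=> k kms; rewrite coefZ coefXn.
  case: (eqVneq (coef (lin s) k) 0) => [->|ck]; first by rewrite !mul0r.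
  case: (boolP (condS S ms.1 ms.2 k)) => cd; last by rewrite mulr0 mul0r.
  case: (eqVneq (d ms) (d k)) => [edk|]; last by rewrite mulr0.
  case/eqP: kms; apply: Kt_eq => j; case: (eqVneq j i) => [->|ji]; last exact: hms.
  have kin := coef_supp ck; have msin := coef_supp cms.
  have := red _ kin; have := red _ msin; have := hN _ kin; have := hN _ msin.
  move: edk; rewrite /d => edk h1 h2 /orP h3 /orP h4.
  move: (k.1 i) (k.2 i) (ms.1 i) (ms.2 i) edk h1 h2 h3 h4 => a1 a2 b1 b2 edk h1 h2 h3 h4.
  by split; case: h3 => h3; case: h4 => h4; nlia.
have E1 : uu S ms.1 * pr i a * vv S ms.2 N = Ep i * horner_alg (x i) R.
  rewrite Es (islin_coef _ (islin_mul _ _)) /R rmorph_sum mulr_sumr.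
  apply: eq_big_seq => k; rewrite mem_undup => kin.
  rewrite uv_sm -mul_polyC rmorphM /= horner_algC hx_Xn -scalerAl mul1r -scalerAr.
  rewrite -scalerA; case: (condS S ms.1 ms.2 k); last by rewrite scale0r scaler0.
  rewrite scale1r Wm_Ep; congr (_ *: (_ * _)).
  by rewrite /Defs.gS (_ : (k.2 i - N = 0)%N) ?expr0 ?mulr1 //; apply/eqP; rewrite subn_eq0 hN.
rewrite -E1 -mulrBl -mulrBr.
apply: ideal_mulr; first exact: pid_ideal.
apply: ideal_mull; first exact: pid_ideal.
by exists (sg i a); rewrite /= -Dl_sg.
Qed.

Lemma Ep_idem i : Ep i * Ep i = Ep i.
Proof.
have BE j : B j (if j != i then gF j 0 0 else 1) by case: (j != i); [apply: BF | apply: B1].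
rewrite /Ep prod_parB //.
apply: eq_bigr => j _; case: (j != i); last by rewrite mulr1.
by have := e_gS_e j 0 0; rewrite /= {1}/Defs.gS !expr0 !mulr1.
Qed.

Lemma comm_x_Ep i : GRing.comm (x i) (Ep i).
Proof.
apply: comm_prod => j _; case: (eqVneq j i) => [->|ji] /=; first exact: commr1.
by apply: commF; [apply: cxx' | apply: cxy']; rewrite eq_sym.
Qed.

Lemma comm_hx_Ep i R : GRing.comm (horner_alg (x i) R) (Ep i).
Proof.
rewrite /GRing.comm hx_exp mulr_suml mulr_sumr; apply: eq_bigr => e _.
rewrite -scalerAl -scalerAr; congr (_ *: _).
by have := commrX e (commr_sym (comm_x_Ep i)); rewrite /GRing.comm => ->.
Qed.

Lemma one_neq0 : (1 : A) != 0.
Proof.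
apply/eqP => h; have := coef_sm k0 k0; rewrite eqxx sm0 h.
by have := cfZ 0 0 k0; rewrite scale0r mul0r => -> /eqP; rewrite eq_sym oner_eq0.
Qed.

Lemma pid_prime i : is_prime (Im [:: i]).
Proof.
split; first exact: pid_ideal.
  move/pid_pr; rewrite -sm0 pr_sm.
  have -> : kred i k0 = k0 by rewrite /kred /k0; congr pair; apply/ffunP => j; rewrite !ffunE; case: ifP.
  by rewrite sm0; apply/eqP; exact: one_neq0.
move=> I J hI hJ H; apply: NNPP => hn; case: (not_or_and _ _ hn) => nI nJ.
have [a Ha] := not_all_ex_not _ _ nI; have [Ia Pa] := imply_to_and _ _ Ha.
have [b Hb] := not_all_ex_not _ _ nJ; have [Jb Pb] := imply_to_and _ _ Hb.
have pa : pr i a != 0 by apply/eqP => h; apply: Pa; apply/pid_pr.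
have pb : pr i b != 0 by apply/eqP => h; apply: Pb; apply/pid_pr.
have [u [v [R1 [R1n HR1]]]] := stepA pa.
have [u' [v' [R2 [R2n HR2]]]] := stepA pb.
set X := u * a * v; set Y := u' * b * v'.
set Z1 := Ep i * horner_alg (x i) R1; set Z2 := Ep i * horner_alg (x i) R2.
have PXY : Im [:: i] (X * Y) by apply: H; [apply: ideal_mulr => //; apply: ideal_mull | apply: ideal_mulr => //; apply: ideal_mull].
have D : Im [:: i] (X * Y - Z1 * Z2).
  have -> : X * Y - Z1 * Z2 = (X - Z1) * Y + Z1 * (Y - Z2).
    by rewrite mulrBl mulrBr addrA subrK.
  case: (pid_ideal i) => _ hD _ _; apply: hD.
    by apply: ideal_mulr => //; exact: pid_ideal.
  by apply: ideal_mull => //; exact: pid_ideal.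
have PZ : Im [:: i] (Z1 * Z2).
  have -> : Z1 * Z2 = X * Y - (X * Y - Z1 * Z2) by rewrite opprB addrC subrK.
  exact: ideal_sub (pid_ideal i) PXY D.
have E : Z1 * Z2 = Ep i * horner_alg (x i) (R1 * R2).
  have -> : horner_alg (x i) (R1 * R2) = horner_alg (x i) R1 * horner_alg (x i) R2.
    exact: rmorphM.
  have C := comm_hx_Ep i R1; move: C; rewrite /GRing.comm /Z1 /Z2.
  set h1 := horner_alg _ R1; set h2 := horner_alg _ R2 => C.
  by rewrite -mulrA (mulrA h1) C !mulrA Ep_idem -mulrA.
have := Ep_notin (eq_ind _ _ PZ _ E); apply/eqP; exact: mulf_neq0.
Qed.

Definition Z0 (a : A) : Prop := a = 0.

Lemma Im_ideal r : uniq r -> is_ideal (Im r).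
Proof.
move=> ur; have E a : Im r a <-> (forall j, j \in r -> Im [:: j] a).
  by split; [move=> h; apply: Im_inter | apply: inter_Im].
split.
- by apply/E => j _; case: (pid_ideal j).
- move=> a b /E ha /E hb; apply/E => j jr; case: (pid_ideal j) => _ hD _ _.
  by apply: hD; [apply: ha | apply: hb].
- move=> a /E ha; apply/E => j jr; case: (pid_ideal j) => _ _ hN _; exact: hN (ha j jr).
move=> c a /E ha; split; apply/E => j jr.
  by apply: ideal_mull; [apply: pid_ideal | apply: ha].
by apply: ideal_mulr; [apply: pid_ideal | apply: ha].
Qed.

Lemma E0_DD : E0 = DD (index_enum 'I_n) (sm k0).
Proof.
by rewrite DD_prod ?index_enum_uniq //; apply: eq_bigr => j _; rewrite mem_index_enum !ffunE.
Qed.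

Lemma coef_E0 : coef E0 k0 = 1.
Proof. by rewrite E0_DD coef_DD ?coef_sm ?eqxx // => j _; rewrite ffunE. Qed.

Lemma coef0 m : coef 0 m = 0.
Proof. by have := cfZ 0 0 m; rewrite scale0r mul0r. Qed.

Lemma E0_neq0 : E0 != 0.
Proof. by apply/eqP => h; have := coef_E0; rewrite h coef0 => /eqP; rewrite eq_sym oner_eq0. Qed.

Lemma E0_idem : E0 * E0 = E0.
Proof.
rewrite /E0 prod_parB; [|by move=> j; apply: BF|by move=> j; apply: BF].
apply: eq_bigr => j _.
by have := e_gS_e j 0 0; rewrite /= {1}/Defs.gS !expr0 !mulr1.
Qed.

Lemma Z0_prime : is_prime Z0.
Proof.
split.
- split=> [|a b -> ->|a ->|r a ->]; rewrite /Z0 ?addr0 ?oppr0 ?mulr0 ?mul0r //.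
- by move/eqP; apply/negP; exact: one_neq0.
move=> I J hI hJ H; apply: NNPP => hn; case: (not_or_and _ _ hn) => nI nJ.
have [a Ha] := not_all_ex_not _ _ nI; have [Ia Pa] := imply_to_and _ _ Ha.
have [b Hb] := not_all_ex_not _ _ nJ; have [Jb Pb] := imply_to_and _ _ Hb.
have IE := K1_E0 hI Ia (introN eqP Pa).
have JE := K1_E0 hJ Jb (introN eqP Pb).
have := H _ _ IE JE; rewrite /Z0 E0_idem => /eqP; apply/negP; exact: E0_neq0.
Qed.

Lemma prime_eqid (P Q : A -> Prop) : eqid P Q -> is_prime Q -> is_prime P.
Proof.
move=> e [[h0 hD hN hM] h1 hp]; split.
- split; first by apply/e.
  + by move=> a b /e ha /e hb; apply/e; apply: hD.
  + by move=> a /e ha; apply/e; apply: hN.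
  by move=> r a /e ha; case: (hM r a ha) => ??; split; apply/e.
- by move/e.
move=> I J hI hJ H; case: (hp I J hI hJ) => [a b Ia Jb|hs|hs].
- by apply/e; apply: H.
- by left=> a /hs /e.
by right=> a /hs /e.
Qed.

Lemma prime_ge_E0 (Q : A -> Prop) : (0 < n)%N -> is_prime Q -> Q E0 ->
  exists j, subid (Im [:: j]) Q.
Proof.
move=> n0 hQ QE.
have hF : subid (Im (index_enum 'I_n)) Q.
  move=> a /FtensE; apply: Ftens_sub => //; by case: hQ.
suff H : forall r : seq 'I_n, uniq r -> r != [::] -> subid (Im r) Q ->
    exists j, subid (Im [:: j]) Q.
  apply: (H (index_enum 'I_n)) => //; first exact: index_enum_uniq.
  by apply/eqP => e; have := mem_index_enum (Ordinal n0); rewrite e.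
elim=> [|i r IH] // /andP[ir ur] _ hs.
case: (eqVneq r [::]) => [re|rn]; first by exists i; rewrite -re.
case: hQ => _ _ hp.
case: (hp (Im [:: i]) (Im r) (pid_ideal i) (Im_ideal ur)).
- move=> a b ha hb; apply: hs; apply: inter_Im => /=; first by rewrite ir.
  move=> j; rewrite inE => /orP[/eqP ->|jr].
    by apply: ideal_mulr => //; exact: pid_ideal.
  by apply: ideal_mull; [exact: pid_ideal | exact: Im_inter hb j jr].
- by move=> h; exists i.
by move=> h; apply: IH.
Qed.

Lemma cfB a b m : coef (a - b) m = coef a m - coef b m.
Proof. by rewrite cfD -scaleN1r cfZ mulN1r. Qed.

Lemma coef_ei i : coef (Dl i 1) k0 = 1.
Proof.
rewrite -sm0 Dl_sm cfB !coef_sm eqxx.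
have -> : (kshift i k0 == k0) = false.
  apply/negbTE/eqP => /(congr1 (fun k : Kt => k.1 i)); rewrite /kshift /dl /= !ffunE eqxx.
  by [].
by rewrite subr0.
Qed.

Lemma ei_neq0 i : Dl i 1 != 0.
Proof. by apply/eqP => h; have := coef_ei i; rewrite h coef0 => /eqP; rewrite eq_sym oner_eq0. Qed.

Lemma ei_in i : Im [:: i] (Dl i 1). Proof. by exists 1. Qed.

Lemma pr_one j : pr j 1 = 1.
Proof.
rewrite -sm0 pr_sm; congr sm; rewrite /kred /k0; congr pair; apply/ffunP => k; rewrite !ffunE.
all: by case: ifP.
Qed.

Lemma ei_notin i j : i != j -> ~ Im [:: j] (Dl i 1).
Proof.
move=> ij /pid_pr; rewrite pr_Dl_comm 1?eq_sym // pr_one => /eqP; apply/negP; exact: ei_neq0.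
Qed.

Lemma nonzero_prime (Q : A -> Prop) a : (0 < n)%N -> is_prime Q -> Q a -> a != 0 ->
  exists j, subid (Im [:: j]) Q.
Proof.
move=> n0 hQ Qa an; apply: prime_ge_E0 => //.
by case: hQ => hI _ _; apply: K1_E0 hI Qa an.
Qed.

Lemma ideal0 (I : A -> Prop) : is_ideal I -> I 0. Proof. by case. Qed.

Lemma height_char (P : A -> Prop) : (0 < n)%N ->
  (is_prime P /\ prime_height P 1 <-> exists i, eqid P (Im [:: i])).
Proof.
move=> n0; split.
  case=> hP [[f [f0 fpr fss]] nch].
  have [_ [a [fa nfa]]] := fss 0%N isT.
  have an : a != 0.
    by apply/eqP => e; apply: nfa; rewrite e; apply: ideal0; case: (fpr 1%N isT).
  have Pa : P a by apply/f0.
  have [j hj] := nonzero_prime n0 hP Pa an.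
  exists j => b; split; last by apply: hj.
  move=> Pb; apply: NNPP => nb; apply: nch.
  exists (fun k => if k == 0%N then P else if k == 1%N then Im [:: j] else Z0); split.
  - by [].
  - case=> [|[|[|k]]] //= _; [exact: pid_prime | exact: Z0_prime].
  case=> [|[|k]] //= _; split.
  - exact: hj.
  - by exists b.
  - by move=> c ->; apply: ideal0; exact: pid_ideal.
  - by exists (Dl j 1); split; [exact: ei_in | apply/eqP; exact: ei_neq0].
case=> i e.
have hP : is_prime P := prime_eqid e (pid_prime i).
split => //; split.
  exists (fun k => if k == 0%N then P else Z0); split.
  - by [].
  - by case=> [|[|k]] //= _; exact: Z0_prime.
  case=> [|k] //= _; split.
  - by move=> c ->; apply: ideal0; case: hP.
  - by exists (Dl i 1); split; [apply/e; exact: ei_in | apply/eqP; exact: ei_neq0].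
case=> f [f0 fpr fss].
have [_ [a [fa nfa]]] := fss 1%N isT.
have an : a != 0.
  by apply/eqP => ez; apply: nfa; rewrite ez; apply: ideal0; case: (fpr 2%N isT).
have [j hj] := nonzero_prime n0 (fpr 1%N isT) fa an.
have [s10 [b [fb nfb]]] := fss 0%N isT.
have sub : subid (Im [:: j]) (Im [:: i]) by move=> c /hj /s10 /f0 /e.
case: (eqVneq j i) => [ji|ji].
  by apply: nfb; apply: hj; rewrite ji; apply/e/f0.
by apply: (ei_notin ji); apply: sub; exact: ei_in.
Qed.

Lemma prod_in (I : A -> Prop) (r : seq 'I_n) (F : 'I_n -> A) j :
  is_ideal I -> j \in r -> I (F j) -> I (\prod_(i <- r) F i).
Proof.
move=> hI; elim: r => [|a r IH] //; rewrite inE big_cons => /orP[/eqP <- | jr] hF.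
  exact: ideal_mulr.
by apply: ideal_mull => //; apply: IH.
Qed.

Lemma prod_scale1 (r : seq 'I_n) (F : 'I_n -> A) i0 c : uniq r -> i0 \in r ->
  \prod_(j <- r) (if j == i0 then c *: F j else F j) = c *: \prod_(j <- r) F j.
Proof.
elim: r => [|a r IH] //= /andP[ar ur]; rewrite inE big_cons big_cons => /orP[/eqP e|ir].
  subst a; rewrite eqxx -scalerAl; congr (_ *: (_ * _)).
  by apply: eq_big_seq => j jr; case: eqP => // e; move: ar; rewrite -e jr.
have -> : (a == i0) = false by apply/negbTE/eqP => e; move: ar; rewrite e ir.
by rewrite IH // scalerAr.
Qed.

Lemma main_sec : (0 < n)%N ->
  [/\ (forall P : A -> Prop,
         is_prime P /\ prime_height P 1 <-> exists i : 'I_n, eqid P (pid x y i)),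
      (forall i j : 'I_n, i != j -> ~ eqid (pid x y i) (pid x y j)),
      (forall i j : 'I_n, i != j -> ~ subid (pid x y i) (pid x y j)),
      eqid (fun a => forall i : 'I_n, pid x y i a) (Ftens x y)
    & eqid (prod_ideal (pid x y)) (Ftens x y)].
Proof.
move=> n0.
have inter : eqid (fun a => forall i : 'I_n, pid x y i a) (Ftens x y).
  move=> a; split=> [h|h j].
    by apply/FtensE; apply: inter_Im; [exact: index_enum_uniq | move=> j _; apply/pidE].
  by apply/pidE; apply: (Im_inter ((FtensE a).1 h)); rewrite mem_index_enum.
split => //.
- move=> P; apply: iff_trans (height_char P n0) _; split.
    by case=> i e; exists i => a; apply: iff_trans (e a) (iff_sym (pidE i a)).
  by case=> i e; exists i => a; apply: iff_trans (e a) (pidE i a).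
- by move=> i j ij e; apply: (ei_notin ij); apply/pidE; apply/e; apply/pidE; exact: ei_in.
- by move=> i j ij e; apply: (ei_notin ij); apply/pidE; apply: e; apply/pidE; exact: ei_in.
move=> a; split.
  case=> m [g [hg ->]]; apply/inter => j; apply/pidE.
  apply: ideal_sum; first exact: pid_ideal.
  move=> t; apply: (prod_in (j := j)); [exact: pid_ideal | exact: mem_index_enum | apply/pidE; exact: hg].
case=> m [c [k [l ->]]].
set i0 := Ordinal n0.
exists m, (fun t i => if i == i0 then c t *: gF i (k t i) (l t i) else gF i (k t i) (l t i)); split.
  move=> t i; apply/pidE; have hF : Im [:: i] (gF i (k t i) (l t i)).
    by exists (gS i (k t i) (l t i)); rewrite /= Dl_gS.
  by case: (i == i0) => //; apply: Im_scale.
apply: eq_bigr => t _; rewrite prod_scale1 ?index_enum_uniq ?mem_index_enum //.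
Qed.
End Sn.

Unset Implicit Arguments.

Theorem lemma4p2 (K : fieldType) (A : algType K) (n : nat) (x y : 'I_n -> A) :
  (0 < n)%N -> Sn_relations x y -> smon_basis x y ->
  [/\ (forall P : A -> Prop,
         is_prime P /\ prime_height P 1 <-> exists i : 'I_n, eqid P (pid x y i)),
      (forall i j : 'I_n, i != j -> ~ eqid (pid x y i) (pid x y j)),
      (forall i j : 'I_n, i != j -> ~ subid (pid x y i) (pid x y j)),
      eqid (fun a => forall i : 'I_n, pid x y i a) (Ftens x y)
    & eqid (prod_ideal (pid x y)) (Ftens x y)].
Proof.
move=> n0 [yx1 hc] [hspan hindep].
have cxy : forall i j, i != j -> x i * y j = y j * x i by move=> i j h; case: (hc i j h).
have cxx : forall i j, i != j -> x i * x j = x j * x i by move=> i j h; case: (hc i j h).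
have cyy : forall i j, i != j -> y i * y j = y j * y i by move=> i j h; case: (hc i j h).
exact: (@main_sec K A n x y yx1 cxy cxx cyy hspan hindep n0).
Qed.
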